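(* Let $\overrightarrow{W}$ be a Morse sequence on a simplicial complex $K$. Then for every $p$: (1) the homology spaces $H_p(K)$ and $H_p(\widehat W)$ are isomorphic vector spaces over $\mathbb{Z}_2$; (2) the cohomology spaces $H^p(K)$ and $H^p(\widehat W)$ are isomorphic vector spaces over $\mathbb{Z}_2$.
   Context: A simplicial complex $K$ is a finite collection of non-empty finite sets closed under taking non-empty subsets; $\dim\sigma=|\sigma|-1$, $K^{(p)}$ the set of $p$-simplices. A pair $(\sigma,\tau)$ with $\sigma\subsetneq\tau$ is a free pair for $K$ if $\tau$ is the only simplex other than $\sigma$ containing $\sigma$; $K$ is then an elementary expansion of $K\setminus\{\sigma,\tau\}$. If $\nu$ is a facet (maximal simplex) of $K$, $K$ is an elementary filling of $K\setminus\{\nu\}$. A Morse sequence on $K$ is a sequence $\langle\emptyset=K_0,\dots,K_k=K\rangle$ with each $K_i$ an elementary expansion or filling of $K_{i-1}$; simplices added by fillings are critical; for an expansion $K_i=K_{i-1}\cup\{\sigma,\tau\}$, $\sigma\subset\tau$, $\sigma$ is lower regular and $\tau$ upper regular. $\widehat W$ is the set of critical simplices. $K[p]$ is the $\mathbb{Z}_2$-vector space of subsets of $K^{(p)}$ (sum = symmetric difference, $0=\emptyset$), $\widehat W[p]=\{c\in K[p]:c\subseteq\widehat W\}$. For $\sigma\in K^{(p)}$, $\partial(\sigma)=\{\tau\in K^{(p-1)}:\tau\subset\sigma\}$, $\delta(\sigma)=\{\tau\in K^{(p+1)}:\sigma\subset\tau\}$, with linear extensions $\partial_p,\delta_p$;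 $H_p(K)=\ker\partial_p/\operatorname{im}\partial_{p+1}$ and $H^p(K)=\ker\delta_p/\operatorname{im}\delta_{p-1}$ (mod 2 simplicial homology and cohomology). The reference map $\curlywedge$ is the unique map assigning to each $p$-simplex an element of $\widehat W[p]$, extended linearly, with $\curlywedge(\nu)=\{\nu\}$ for critical $\nu$ and $\curlywedge(\tau)=0=\curlywedge(\partial(\tau))$ for upper regular $\tau$; the coreference map $\curlyvee$ is the unique such map with $\curlyvee(\nu)=\{\nu\}$ for critical $\nu$ and $\curlyvee(\sigma)=0=\curlyvee(\delta(\sigma))$ for lower regular $\sigma$. The critical complex is the chain complex $(\widehat W[p],\widehat\partial_p)$ with $\widehat\partial_p(c)=\curlywedge(\partial_p(c))$, and the cocritical complex is the cochain complex $(\widehat W[p],\widehat\delta_p)$ with $\widehat\delta_p(c)=\curlyvee(\delta_p(c))$ (these satisfy $\widehat\partial\circ\widehat\partial=0$ and $\widehat\delta\circ\widehat\delta=0$). $H_p(\widehat W)=\ker\widehat\partial_p/\operatorname{im}\widehat\partial_{p+1}$ and $H^p(\widehat W)=\ker\widehat\delta_p/\operatorname{im}\widehat\delta_{p-1}$. *)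

(* Defs.v *)
(* Simplicial complexes on a finite vertex type V;
   simplices are nonempty sets {set V}; a p-simplex has cardinality p+1.
   Z2-chains are sets of simplices (sum = symmetric difference), as in the paper. *)
From mathcomp Require Import all_boot.
Set Implicit Arguments. Unset Strict Implicit. Unset Printing Implicit Defensive.

Section Defs.
Variable V : finType.
Notation simplex := {set V}.
Notation chainT := {set {set V}}.

Definition symd (A B : chainT) : chainT := (A :\: B) :|: (B :\: A).

Definition is_complex (K : chainT) : Prop :=
  set0 \notin K /\
  forall s t : simplex, s \in K -> t != set0 -> t \subset s -> t \in K.

(* simplices of K of cardinality n (i.e. of dimension n-1) *)
Definition Kcard (K : chainT) (n : nat) : chainT := [set s in K | #|s| == n].

Definition chain (K : chainT) (n : nat) (c : chainT) : Prop := c \subset Kcard K n.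

Definition linext (f : simplex -> chainT) (c : chainT) : chainT :=
  foldr (fun s acc => symd (f s) acc) set0 (enum c).

Definition bnd (K : chainT) (s : simplex) : chainT :=
  [set t in K | (t \proper s) && (#|t|.+1 == #|s|)].
Definition cobnd (K : chainT) (s : simplex) : chainT :=
  [set t in K | (s \proper t) && (#|s|.+1 == #|t|)].

Definition bd (K : chainT) (c : chainT) : chainT := linext (bnd K) c.
Definition cobd (K : chainT) (c : chainT) : chainT := linext (cobnd K) c.

Definition free_pair (L : chainT) (sigma tau : simplex) : Prop :=
  sigma \proper tau /\ sigma \in L /\ tau \in L /\
  forall t, t \in L -> sigma \subset t -> t = sigma \/ t = tau.

Definition elem_expansion (L L' : chainT) : Prop :=
  exists sigma tau, free_pair L' sigma tau /\ L = L' :\ sigma :\ tau.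

Definition facet (L : chainT) (nu : simplex) : Prop :=
  nu \in L /\ forall t, t \in L -> nu \subset t -> t = nu.

Definition elem_filling (L L' : chainT) : Prop :=
  exists nu, facet L' nu /\ L = L' :\ nu.

Definition morse_seq (K : chainT) (W : nat -> chainT) (k : nat) : Prop :=
  W 0 = set0 /\ W k = K /\
  forall i, i < k -> is_complex (W i.+1) /\
    (elem_expansion (W i) (W i.+1) \/ elem_filling (W i) (W i.+1)).

Definition critical (W : nat -> chainT) (k : nat) (nu : simplex) : Prop :=
  exists i, i < k /\ elem_filling (W i) (W i.+1) /\ W i = W i.+1 :\ nu /\ nu \in W i.+1.

Definition exp_pair (W : nat -> chainT) (k : nat) (sigma tau : simplex) : Prop :=
  exists i, i < k /\ free_pair (W i.+1) sigma tau /\ W i = W i.+1 :\ sigma :\ tau.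

Definition lower_regular W k (sigma : simplex) : Prop := exists tau, exp_pair W k sigma tau.
Definition upper_regular W k (tau : simplex) : Prop := exists sigma, exp_pair W k sigma tau.

Definition crit_chain (K : chainT) (W : nat -> chainT) (k n : nat) (c : chainT) : Prop :=
  chain K n c /\ forall s, s \in c -> critical W k s.

(* the reference map (characterizing properties, which determine it uniquely) *)
Definition reference_map (K : chainT) (W : nat -> chainT) (k : nat)
    (r : simplex -> chainT) : Prop :=
  (forall s, s \in K -> crit_chain K W k #|s| (r s)) /\
  (forall nu, critical W k nu -> r nu = [set nu]) /\
  (forall tau, upper_regular W k tau -> r tau = set0 /\ linext r (bnd K tau) = set0).

Definition coreference_map (K : chainT) (W : nat -> chainT) (k : nat)
    (r : simplex -> chainT) : Prop :=
  (forall s, s \in K -> crit_chain K W k #|s| (r s)) /\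
  (forall nu, critical W k nu -> r nu = [set nu]) /\
  (forall sigma, lower_regular W k sigma -> r sigma = set0 /\ linext r (cobnd K sigma) = set0).

(* cycles / boundaries of K in dimension p (simplices of cardinality p+1) *)
Definition cyclesK K p (c : chainT) : Prop := chain K p.+1 c /\ bd K c = set0.
Definition boundK K p (b : chainT) : Prop := exists d, chain K p.+2 d /\ b = bd K d.
Definition cocyclesK K p (c : chainT) : Prop := chain K p.+1 c /\ cobd K c = set0.
Definition coboundK K p (b : chainT) : Prop := exists d, chain K p d /\ b = cobd K d.

(* the critical complex: hat-partial c = curlywedge (partial c) *)
Definition cyclesW K W k r p (c : chainT) : Prop :=
  crit_chain K W k p.+1 c /\ linext r (bd K c) = set0.
Definition boundW K W k r p (b : chainT) : Prop :=
  exists d, crit_chain K W k p.+2 d /\ b = linext r (bd K d).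
(* the cocritical complex: hat-delta c = curlyvee (delta c) *)
Definition cocyclesW K W k r p (c : chainT) : Prop :=
  crit_chain K W k p.+1 c /\ linext r (cobd K c) = set0.
Definition coboundW K W k r p (b : chainT) : Prop :=
  exists d, crit_chain K W k p d /\ b = linext r (cobd K d).

(* Z1/B1 and Z2/B2 are isomorphic Z2-vector spaces: some Z2-linear map
   induces a well-defined bijection Z1/B1 -> Z2/B2. *)
Definition quot_iso (Z1 B1 Z2 B2 : chainT -> Prop) : Prop :=
  exists f : chainT -> chainT,
    (forall A B, f (symd A B) = symd (f A) (f B)) /\
    (forall z, Z1 z -> Z2 (f z)) /\
    (forall b, B1 b -> B2 (f b)) /\
    (forall z, Z1 z -> B2 (f z) -> B1 z) /\
    (forall w, Z2 w -> exists z, Z1 z /\ B2 (symd (f z) w)).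

End Defs.

(* Main.v *)
Require Import Defs.
From mathcomp Require Import all_boot.
From Stdlib Require Import Classical Lia.
From mathcomp Require Import zify.
Set Implicit Arguments. Unset Strict Implicit. Unset Printing Implicit Defensive.
Section Lin.
Variable V : finType.
Implicit Types (A B c : {set {set V}}) (f h : {set V} -> {set {set V}}).

Lemma in_symd A B x : (x \in symd A B) = (x \in A) (+) (x \in B).
Proof. by rewrite /symd !inE; case: (x \in A); case: (x \in B). Qed.

Lemma in_linext f c x : (x \in linext f c) = \big[addb/false]_(s in c) (x \in f s).
Proof.
rewrite /linext; transitivity (\big[addb/false]_(s <- enum c) (x \in f s)); last by rewrite big_enum.
elim: (enum c) => [|s l IH] /=; first by rewrite big_nil inE.
by rewrite big_cons in_symd IH.
Qed.

Lemma big_addb_in (A : {set {set V}}) (F : {set V} -> bool) :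
  \big[addb/false]_(s in A) F s = \big[addb/false]_s ((s \in A) && F s).
Proof. by rewrite big_mkcond; apply: eq_bigr => s _; case: (s \in A). Qed.

Lemma linext_symd f A B : linext f (symd A B) = symd (linext f A) (linext f B).
Proof.
apply/setP => x; rewrite in_symd !in_linext !big_addb_in -big_split /=.
by apply: eq_bigr => s _; rewrite in_symd; case: (s \in A); case: (s \in B); case: (x \in f s).
Qed.

Lemma linext0 f : linext f set0 = set0.
Proof. by rewrite /linext enum_set0. Qed.

Lemma linext_ex f c x : x \in linext f c -> exists2 s, s \in c & x \in f s.
Proof.
rewrite in_linext => H.
have [s /andP [Hs Hx] | Hn] := pickP (fun s => (s \in c) && (x \in f s)).
  by exists s.
rewrite big1 // in H => s Hs. by have := Hn s; rewrite Hs /= => ->.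
Qed.

Lemma linext_ext f f' c : (forall s, s \in c -> f s = f' s) -> linext f c = linext f' c.
Proof. move=> H; apply/setP => x; rewrite !in_linext; apply: eq_bigr => s Hs; by rewrite H. Qed.

Lemma linext_zero f c : (forall s, s \in c -> f s = set0) -> linext f c = set0.
Proof.
move=> H; apply/setP => x; rewrite [x \in set0]inE; apply/negP => /linext_ex [s Hs].
by rewrite H // inE.
Qed.

Lemma linext_sub f c (P : {set {set V}}) : (forall s, s \in c -> f s \subset P) -> linext f c \subset P.
Proof. move=> H; apply/subsetP => x /linext_ex [s Hs Hx]; exact: (subsetP (H s Hs) x Hx). Qed.

Lemma linext_set1 f s : linext f [set s] = f s.
Proof. by apply/setP => x; rewrite in_linext big_set1. Qed.

Lemma linext_id c : linext (fun s => [set s]) c = c.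
Proof.
apply/setP => x; rewrite in_linext; case: (boolP (x \in c)) => Hx.
  rewrite (bigD1 x) //= inE eqxx big1 // => s /andP [_ Hs]; by rewrite inE eq_sym (negbTE Hs).
rewrite big1 // => s Hs; rewrite inE; apply/negP => /eqP E; subst; by rewrite Hs in Hx.
Qed.

Lemma andb_bigl (I : finType) (P : pred I) (F : I -> bool) y :
  (\big[addb/false]_(i | P i) F i) && y = \big[addb/false]_(i | P i) (F i && y).
Proof. apply: (big_rec2 (fun u v => u && y = v)) => // i a b _ <-; by case: (F i); case: a; case: y. Qed.

Lemma linext_comp f h c : linext f (linext h c) = linext (fun s => linext f (h s)) c.
Proof.
apply/setP => x; rewrite in_linext big_addb_in.
under eq_bigr => t _ do rewrite in_linext andb_bigl.
rewrite exchange_big /= in_linext; apply: eq_bigr => s _.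
by rewrite in_linext big_addb_in.
Qed.

Lemma big_addb_true (A : {set {set V}}) : \big[addb/false]_(i in A) true = odd #|A|.
Proof. rewrite big_const; elim: #|A| => //= n ->; by case: (odd n). Qed.

Lemma symdC A B : symd A B = symd B A.
Proof. by apply/setP => x; rewrite !in_symd addbC. Qed.
Lemma symdA A B c : symd A (symd B c) = symd (symd A B) c.
Proof. by apply/setP => x; rewrite !in_symd addbA. Qed.
Lemma symd0 A : symd A set0 = A.
Proof. by apply/setP => x; rewrite !in_symd inE addbF. Qed.
Lemma symdxx A : symd A A = set0.
Proof. by apply/setP => x; rewrite !in_symd inE addbb. Qed.
Lemma symdK A B : symd (symd A B) B = A.
Proof. by rewrite -symdA symdxx symd0. Qed.
Lemma symd_sub A B (P : {set {set V}}) : A \subset P -> B \subset P -> symd A B \subset P.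
Proof.
move=> /subsetP HA /subsetP HB; apply/subsetP => x; rewrite in_symd.
by case HxA: (x \in A); case HxB: (x \in B) => //= _; [apply: HA | apply: HB].
Qed.
Lemma symd_or A B x : x \in symd A B -> x \in A \/ x \in B.
Proof. rewrite in_symd; case: (x \in A); case: (x \in B); auto. Qed.

Lemma symd_eq0 A B : symd A B = set0 -> A = B.
Proof.
move=> H; apply/setP => x; have : x \in symd A B = (x \in (set0 : {set {set V}})) by rewrite H.
by rewrite in_symd inE; case: (x \in A); case: (x \in B).
Qed.

End Lin.

Section Abstract.
Variable V : finType.
Notation S := {set V}.
Variables (K : {set S}) (D r : S -> {set S}) (g : S -> nat) (up sh : nat -> nat)
  (crit : S -> Prop) (pr : S -> S -> Prop) (T : S -> nat).
Hypothesis HDK : forall s, D s \subset K.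
Hypothesis HDD : forall s, s \in K -> linext D (D s) = set0.
Hypothesis Htri : forall s, s \in K -> crit s \/ (exists b, pr s b) \/ (exists a, pr a s).
Hypothesis Hcrit : forall s, crit s -> r s = [set s].
Hypothesis HB : forall a b, pr a b -> r b = set0 /\ linext r (D b) = set0.
Hypothesis Hr : forall s, s \in K ->
  r s \subset [set x in K | g x == g s] /\ forall x, x \in r s -> crit x.
Hypothesis Hpr : forall a b, pr a b -> [/\ a \in K /\ b \in K, a \in D b, T a = T b,
   (forall x, x \in D b -> x <> a -> T x < T a) &
   (forall y, y \in K -> a \in D y -> y = b \/ T a < T y)].
Hypothesis Huniq : forall a b a' b', pr a b -> pr a' b' -> T a = T a' -> a = a' /\ b = b'.
Hypothesis Hup : forall a b, pr a b -> g b = up (g a).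
Hypothesis HDg : forall s x, s \in K -> x \in D s -> g x = sh (g s).
Hypothesis Hpg : forall a b x, pr a b -> x \in D b -> g x = g a.

Definition noA (x : {set S}) := forall s, s \in x -> ~ exists b, pr s b.
Definition isB (e : {set S}) := forall b, b \in e -> exists a, pr a b.

Lemma DD_chain (c : {set S}) : c \subset K -> linext D (linext D c) = set0.
Proof.
move=> /subsetP Hc; rewrite linext_comp; apply: linext_zero => s Hs; exact: HDD (Hc s Hs).
Qed.

Lemma rDB (e : {set S}) : isB e -> linext r (linext D e) = set0.
Proof.
move=> He; rewrite linext_comp; apply: linext_zero => s Hs.
have [a Ha] := He s Hs; exact: (HB Ha).2.
Qed.

Lemma rB (e : {set S}) : isB e -> linext r e = set0.
Proof.
move=> He; apply: linext_zero => s Hs; have [a Ha] := He s Hs; exact: (HB Ha).1.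
Qed.

Lemma isB_sub (e : {set S}) : isB e -> e \subset K.
Proof. move=> He; apply/subsetP => b Hb; have [a Ha] := He b Hb; by case: (Hpr Ha) => [[]]. Qed.

Lemma r_noA_other (x : {set S}) s s' : x \subset K -> noA x -> s' \in x -> s' != s -> s \notin r s'.
Proof.
move=> /subsetP HxK HA Hs' Hne.
case: (Htri (HxK s' Hs')) => [Hc | [Ha | [a Ha]]].
- by rewrite Hcrit // inE eq_sym.
- by case: (HA s' Hs').
- by rewrite (HB Ha).1 inE.
Qed.

Lemma r_noA_crit (x : {set S}) s : x \subset K -> noA x -> s \in x -> crit s -> s \in linext r x.
Proof.
move=> HxK HA Hs Hc; rewrite in_linext (bigD1 s) //= Hcrit // inE eqxx /=.
rewrite big1 // => s' /andP [Hs' Hne]; exact: (negbTE (r_noA_other HxK HA Hs' Hne)).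
Qed.

Lemma Zlemma (x : {set S}) : x \subset K -> noA x -> linext r x = set0 -> linext D x = set0 -> x = set0.
Proof.
move=> HxK HA Hr0 HD0.
have HBx : forall s, s \in x -> exists a, pr a s.
  move=> s Hs; case: (Htri (subsetP HxK s Hs)) => [Hc | [Ha | //]].
  - by have := r_noA_crit HxK HA Hs Hc; rewrite Hr0 inE.
  - by case: (HA s Hs).
apply/setP => b0; rewrite [b0 \in set0]inE; apply/negP => Hb0.
case: (@arg_maxnP _ b0 (fun s => s \in x) T Hb0) => b Hb Hmax.
have [a Hab] := HBx b Hb.
have [[HaK HbK] HaD HTab _ Hy] := Hpr Hab.
have : a \in linext D x.
  rewrite in_linext (bigD1 b) //= HaD /= big1 // => y /andP [Hyx Hne].
  apply/negP => HaDy.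
  case: (Hy y (subsetP HxK y Hyx) HaDy) => [E | Hlt]; first by rewrite E eqxx in Hne.
  have := Hmax y Hyx; rewrite -HTab => Hle.
  by have := leq_trans Hlt Hle; rewrite ltnn.
by rewrite HD0 inE.
Qed.

Lemma Faux (P : S -> Prop) :
  (forall a b x, pr a b -> P a -> x \in D b -> P x) ->
  forall N (c : {set S}), c \subset K -> (forall s, s \in c -> P s) ->
  (forall s b, s \in c -> pr s b -> T s < N) ->
  exists e : {set S}, (forall b, b \in e -> exists a, pr a b /\ P a) /\ noA (symd c (linext D e)).
Proof.
move=> HP; elim=> [|N IH] c HcK HcP HcT.
  exists set0; split => [b|]; first by rewrite inE.
  rewrite linext0 symd0 => s Hs [b Hb]; by have := HcT s b Hs Hb.
case: (classic (exists a b, [/\ a \in c, pr a b & T a = N])) => [[a [b [Hac Hab HTa]]] | Hno].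
- have [[HaK HbK] HaD HTab Hx Hy] := Hpr Hab.
  have Hanot : a \notin symd c (D b) by rewrite in_symd Hac HaD.
  have [e' [He' HA']] : exists e : {set S}, (forall b, b \in e -> exists a, pr a b /\ P a) /\
       noA (symd (symd c (D b)) (linext D e)).
    apply: IH.
    + exact: symd_sub.
    + move=> s /symd_or [Hs | Hs]; [exact: HcP | exact: HP Hab (HcP a Hac) Hs].
    + move=> s b' Hs Hsb'.
      case HsD: (s \in D b).
      * have Hne : s <> a by move=> E; subst; rewrite Hs in Hanot.
        by rewrite -HTa; apply: Hx.
      * have Hsc : s \in c by move: Hs; rewrite in_symd HsD addbF.
        have := HcT s b' Hsc Hsb'; rewrite ltnS leq_eqVlt => /orP [/eqP E | //].
        have [Esa _] := Huniq Hsb' Hab (etrans E (esym HTa)).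
        by subst; rewrite HaD in HsD.
  exists (symd e' [set b]); split.
  + move=> b' /symd_or [Hb' | ]; first exact: He'.
    rewrite inE => /eqP ->; exists a; split => //; exact: HcP.
  + by rewrite linext_symd linext_set1 (symdC (linext D e')) symdA.
- apply: IH => // s b Hs Hsb; have := HcT s b Hs Hsb.
  rewrite ltnS leq_eqVlt => /orP [/eqP E | //].
  by case: Hno; exists s, b.
Qed.

Lemma Flemma (P : S -> Prop) (c : {set S}) :
  (forall a b x, pr a b -> P a -> x \in D b -> P x) ->
  c \subset K -> (forall s, s \in c -> P s) ->
  exists e : {set S}, (forall b, b \in e -> exists a, pr a b /\ P a) /\ noA (symd c (linext D e)).
Proof.
move=> HP HcK HcP; apply: (Faux HP (N := (\max_(s : S) T s).+1)) => // s b _ _.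
by rewrite ltnS leq_bigmax.
Qed.

Lemma chain_map (c : {set S}) : c \subset K -> linext r (linext D c) = linext r (linext D (linext r c)).
Proof.
move=> HcK.
have [e [He HA]] := Flemma (P := fun _ => True) (fun _ _ _ _ _ _ => I) HcK (fun _ _ => I).
have HeB : isB e by move=> b /He [a [Ha _]]; exists a.
have HeK := isB_sub HeB.
set x := symd c (linext D e) in HA.
have HxK : x \subset K by apply: symd_sub => //; apply: linext_sub => s _; exact: HDK.
have Ec : c = symd x (linext D e) by rewrite /x symdK.
clearbody x.
rewrite Ec !linext_symd (DD_chain HeK) linext0 symd0 (rDB HeB) !linext0 symd0.
rewrite !linext_comp; apply: linext_ext => s Hs.
case: (Htri (subsetP HxK s Hs)) => [Hc | [Ha | [a Ha]]].
- by rewrite Hcrit // linext_set1.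
- by case: (HA s Hs).
- by rewrite (HB Ha).1 (HB Ha).2 linext0.
Qed.

Lemma r_crit_chain (c : {set S}) j : c \subset [set s in K | g s == j] ->
  linext r c \subset [set s in K | g s == j] /\ forall s, s \in linext r c -> crit s.
Proof.
move=> /subsetP Hc; split.
  apply: linext_sub => s Hs; have := Hc s Hs; rewrite inE => /andP [HsK /eqP <-].
  exact: (Hr HsK).1.
move=> x /linext_ex [s Hs Hx]; have := Hc s Hs; rewrite inE => /andP [HsK _].
exact: (Hr HsK).2.
Qed.

Lemma KG_K (c : {set S}) j : c \subset [set s in K | g s == j] -> c \subset K.
Proof. move=> /subsetP H; apply/subsetP => s /H; by rewrite inE => /andP [].  Qed.

Lemma KG_grade (c : {set S}) j : c \subset [set s in K | g s == j] -> forall s, s \in c -> g s = j.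
Proof. move=> /subsetP H s /H; by rewrite inE => /andP [_ /eqP]. Qed.

Lemma noA_symd (x y : {set S}) : noA x -> noA y -> noA (symd x y).
Proof. move=> Hx Hy s /symd_or [Hs | Hs]; [exact: Hx | exact: Hy]. Qed.

Lemma grade_inv j : forall a b x, pr a b -> (fun s => g s = j) a -> x \in D b -> (fun s => g s = j) x.
Proof. move=> a b x Hab /= <- HxD; exact: Hpg Hab HxD. Qed.

Theorem abstract_iso n m : m = up n -> sh m = n -> up (sh n) = n ->
  quot_iso (fun c : {set S} => c \subset [set s in K | g s == n] /\ linext D c = set0)
           (fun b => exists d : {set S}, d \subset [set s in K | g s == m] /\ b = linext D d)
           (fun c : {set S} => (c \subset [set s in K | g s == n] /\ forall s, s \in c -> crit s) /\
                     linext r (linext D c) = set0)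
           (fun b => exists d : {set S}, (d \subset [set s in K | g s == m] /\ forall s, s \in d -> crit s) /\
                     b = linext r (linext D d)).
Proof.
move=> Hm Hsh Hupsh.
have HDgr : forall (c : {set S}) j, c \subset [set s in K | g s == j] ->
     forall s, s \in linext D c -> g s = sh j.
  move=> c j /subsetP Hc s /linext_ex [t Ht Hs]; have := Hc t Ht; rewrite inE => /andP [HtK /eqP <-].
  exact: HDg.
have HDsubK : forall c, linext D c \subset K by move=> c; apply: linext_sub => s _; exact: HDK.
have HeKG : forall (e : {set S}) j, (forall b, b \in e -> exists a, pr a b /\ g a = j) ->
      e \subset [set s in K | g s == up j].
  move=> e j He; apply/subsetP => b /He [a [Hab Hga]]; rewrite inE.
  have [[_ HbK] _ _ _ _] := Hpr Hab; by rewrite HbK (Hup Hab) Hga /=.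
have HeB : forall (e : {set S}) j, (forall b, b \in e -> exists a, pr a b /\ g a = j) -> isB e.
  by move=> e j He b /He [a [Ha _]]; exists a.
exists (linext r); split; [|split; [|split; [|split]]].
- exact: linext_symd.
- move=> z [Hz HDz]; split; first exact: r_crit_chain.
  by rewrite -chain_map ?HDz ?linext0 //; exact: KG_K Hz.
- move=> b [d [Hd ->]]; exists (linext r d); split; first exact: r_crit_chain.
  apply: chain_map; exact: KG_K Hd.
- move=> z [Hz HDz] [d' [[Hd' Hd'c] Eq]].
  have HzK := KG_K Hz; have Hd'K := KG_K Hd'.
  have [e1 [He1 HA1]] := Flemma (grade_inv (j := n)) HzK (KG_grade Hz).
  have Hgd : forall s, s \in linext D d' -> g s = n.
    by move=> s Hs; rewrite (HDgr d' m Hd' s Hs) Hsh.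
  have [e2 [He2 HA2]] := Flemma (grade_inv (j := n)) (HDsubK d') Hgd.
  have He1K := isB_sub (HeB _ _ He1); have He2K := isB_sub (HeB _ _ He2).
  have Ey : symd (symd z (linext D e1)) (symd (linext D d') (linext D e2)) = set0.
    apply: Zlemma.
    + by repeat apply: symd_sub.
    + exact: noA_symd.
    + rewrite !linext_symd (rDB (HeB _ _ He1)) (rDB (HeB _ _ He2)) !symd0 Eq; exact: symdxx.
    + by rewrite !linext_symd HDz (DD_chain He1K) (DD_chain Hd'K) (DD_chain He2K) !symd0.
  have Ez := symd_eq0 Ey.
  exists (symd (symd d' e2) e1); split.
    apply: symd_sub; first apply: symd_sub => //.
    + by rewrite Hm; exact: HeKG He2.
    + by rewrite Hm; exact: HeKG He1.
  by rewrite !linext_symd -Ez symdK.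
- move=> w [[Hw Hwc] HrDw].
  have HwK := KG_K Hw.
  have [e [He HA]] := Flemma (grade_inv (j := sh n)) (HDsubK w) (HDgr w n Hw).
  have HeK := isB_sub (HeB _ _ He).
  have Ex : symd (linext D w) (linext D e) = set0.
    apply: Zlemma.
    + by repeat apply: symd_sub.
    + exact: HA.
    + by rewrite linext_symd (rDB (HeB _ _ He)) HrDw symd0.
    + by rewrite linext_symd (DD_chain HwK) (DD_chain HeK) symd0.
  exists (symd w e); split.
    split; last by rewrite linext_symd.
    apply: symd_sub => //; rewrite -Hupsh; exact: HeKG He.
  exists set0; split.
    by split; [exact: sub0set | move=> s; rewrite inE].
  rewrite !linext0 linext_symd (rB (HeB _ _ He)) symd0.
  have -> : linext r w = w.
    rewrite -{2}(linext_id w); apply: linext_ext => s Hs; exact: Hcrit (Hwc s Hs).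
  exact: symdxx.
Qed.

End Abstract.
Section Concrete.
Variable V : finType.
Notation S := {set V}.
Variables (K : {set S}) (W : nat -> {set S}) (k : nat).
Hypothesis HK : is_complex K.
Hypothesis HM : morse_seq K W k.

Lemma Wsub i : i < k -> W i \subset W i.+1.
Proof.
move=> Hi; have [_ [_ H]] := HM; case: (H i Hi) => _ [[s [t [_ ->]]] | [nu [_ ->]]].
  exact: subset_trans (subD1set _ _) (subD1set _ _).
exact: subD1set.
Qed.

Lemma Wmono i j : i <= j -> j <= k -> W i \subset W j.
Proof.
move=> Hij; elim: j Hij => [|j IH] Hij Hj.
  by rewrite leqn0 in Hij; rewrite (eqP Hij).
move: Hij; rewrite leq_eqVlt => /orP [/eqP -> | Hij] //.
apply: subset_trans (IH Hij (ltnW Hj)) (Wsub Hj).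
Qed.

Lemma WK i : i <= k -> W i \subset K.
Proof. move=> Hi; have [_ [HWk _]] := HM; rewrite -HWk; exact: Wmono. Qed.

Lemma Wcomplex i : i <= k -> is_complex (W i).
Proof.
have [HW0 [_ H]] := HM; case: i => [|i] Hi.
  rewrite HW0; split; first by rewrite inE.
  by move=> s t; rewrite inE.
exact: (H i Hi).1.
Qed.

Definition T (s : S) := count (fun j => s \notin W j.+1) (iota 0 k).

Lemma T_added s i : i < k -> s \notin W i -> s \in W i.+1 -> T s = i.
Proof.
move=> Hik Hni Hi1.
have E : k = i + (k - i) by rewrite subnKC // ltnW.
rewrite /T E iotaD count_cat add0n.
have -> : count (fun j => s \notin W j.+1) (iota 0 i) = i.
  rewrite -{2}(size_iota 0 i) -count_predT; apply: eq_in_count => j.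
  rewrite mem_iota add0n => /andP [_ Hji] /=; apply/negP => Hj.
  by have := subsetP (Wmono Hji (ltnW Hik)) s Hj; rewrite (negbTE Hni).
have -> : count (fun j => s \notin W j.+1) (iota i (k - i)) = 0.
  rewrite -(count_pred0 (iota i (k - i))); apply: eq_in_count => j.
  rewrite mem_iota => /andP [Hij Hjk] /=.
  have Hjk' : j < k by rewrite E.
  by rewrite (subsetP (Wmono (i := i.+1) (j := j.+1) Hij Hjk') s Hi1).
by rewrite addn0.
Qed.

Lemma added s : s \in K -> exists i, [/\ i < k, s \notin W i & s \in W i.+1].
Proof.
have [HW0 [HWk _]] := HM.
move=> HsK.
have : s \in W k by rewrite HWk.
have : s \notin W 0 by rewrite HW0 inE.
have : k <= k by [].
elim: {-2}k => [|n IH] Hn H0 Hn'.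
  by rewrite Hn' in H0.
case Hsn: (s \in W n).
  have [i [Hi1 Hi2 Hi3]] := IH (ltnW Hn) H0 Hsn; exists i; split => //; exact: ltnW.
by exists n; rewrite Hsn.
Qed.

Lemma T_lt s j : j <= k -> s \in W j -> T s < j.
Proof.
move=> Hj Hs; have HsK := subsetP (WK Hj) s Hs.
have [i [Hik Hni Hi1]] := added HsK; rewrite (T_added Hik Hni Hi1).
rewrite ltnNge; apply/negP => Hji.
by have := subsetP (Wmono Hji (ltnW Hik)) s Hs; rewrite (negbTE Hni).
Qed.

Lemma T_ge s j : j <= k -> s \in K -> s \notin W j -> j <= T s.
Proof.
move=> Hj HsK Hs.
have [i [Hik Hni Hi1]] := added HsK; rewrite (T_added Hik Hni Hi1).
rewrite leqNgt; apply/negP => Hij.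
by have := subsetP (Wmono Hij Hj) s Hi1; rewrite (negbTE Hs).
Qed.

Lemma T_ltk s : s \in K -> T s < k.
Proof. move=> HsK; have [i [Hik Hni Hi1]] := added HsK; by rewrite (T_added Hik Hni Hi1). Qed.

Lemma K_ne0 s : s \in K -> s != set0.
Proof. move=> Hs; apply/negP => /eqP E; subst; by have := HK.1; rewrite Hs. Qed.

Lemma free_card (L : {set S}) sg ta : is_complex L -> free_pair L sg ta -> #|ta| = #|sg|.+1.
Proof.
move=> [_ HL] [Hp [Hs [Ht Hfree]]].
have [Hsub [u Hu Hnu]] := properP Hp.
have Hut : u |: sg \subset ta by rewrite subUset sub1set Hu Hsub.
have Hne : u |: sg != set0 by apply/set0Pn; exists u; rewrite !inE eqxx.
have HuL := HL ta _ Ht Hne Hut.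
case: (Hfree _ HuL (subsetUr _ _)) => E.
  by move: Hnu; rewrite -E !inE eqxx.
by rewrite -E cardsU1 Hnu.
Qed.

Lemma in_D2 (x a b : S) (A : {set S}) : x \in A :\ a :\ b = [&& x != b, x != a & x \in A].
Proof. by rewrite !inE. Qed.

Lemma exp_info sg ta : exp_pair W k sg ta -> exists i,
  [/\ i < k, free_pair (W i.+1) sg ta, W i = W i.+1 :\ sg :\ ta, T sg = i & T ta = i].
Proof.
move=> [i [Hik [Hfp EW]]]; exists i; split => //.
- have [Hp [Hs [Ht _]]] := Hfp; apply: T_added => //; by rewrite EW in_D2 eqxx andbF.
- have [Hp [Hs [Ht _]]] := Hfp; apply: T_added => //; by rewrite EW in_D2 eqxx.
Qed.

Lemma exp_card sg ta : exp_pair W k sg ta -> #|ta| = #|sg|.+1.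
Proof.
move=> [i [Hik [Hfp EW]]]; apply: free_card Hfp; exact: Wcomplex.
Qed.

Lemma exp_K sg ta : exp_pair W k sg ta -> sg \in K /\ ta \in K.
Proof.
move=> [i [Hik [[_ [Hs [Ht _]]] EW]]]; split; exact: (subsetP (WK Hik)).
Qed.

Lemma tri s : s \in K -> critical W k s \/ (exists b, exp_pair W k s b) \/ (exists a, exp_pair W k a s).
Proof.
move=> HsK; have [i [Hik Hni Hi1]] := added HsK.
have [_ [_ H]] := HM; case: (H i Hik) => _ [[sg [ta [Hfp EW]]] | [nu [Hf EW]]].
- move: Hni; rewrite EW in_D2 Hi1 andbT negb_and !negbK => /orP [/eqP E | /eqP E]; subst.
  + by right; right; exists sg, i.
  + by right; left; exists ta, i.
- move: Hni; rewrite EW !inE Hi1 andbT negbK => /eqP E; rewrite E in Hi1 *.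
  left; exists i; split => //; split; first by exists nu.
  by split.
Qed.

Lemma exp_uniq a b a' b' : exp_pair W k a b -> exp_pair W k a' b' -> T a = T a' -> a = a' /\ b = b'.
Proof.
move=> Hab Ha'b' ET.
have [i [Hik [Hp [Ha [Hb _]]] EW Ta Tb]] := exp_info Hab.
have [i' [Hik' [Hp' [Ha' [Hb' _]]] EW' Ta' Tb']] := exp_info Ha'b'.
have Eii : i' = i by rewrite -Ta -Ta'.
rewrite Eii in EW'.
have Hna : a \notin W i by rewrite EW in_D2 eqxx andbF.
have Hnb : b \notin W i by rewrite EW in_D2 eqxx.
have Hna' : a' \notin W i by rewrite EW' in_D2 eqxx andbF.
move: Hna Hnb Hna'; rewrite EW' !in_D2 Ha Hb ?Ha' !andbT !negb_and !negbK.
have Ca := exp_card Hab; have Ca' := exp_card Ha'b'.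
move=> /orP [/eqP Eab' | /eqP Eaa'] /orP [/eqP Ebb' | /eqP Eba'].
- by move: Ca; rewrite Eab' Ebb'; lia.
- by move: Ca Ca'; rewrite Eab' Eba'; lia.
- by split.
- by move: Ca; rewrite Eaa' Eba'; lia.
Qed.

Lemma proper_ne0 (a t : S) : a \proper t -> t != set0.
Proof. move=> /properP [_ [u Hu _]]; apply/set0Pn; by exists u. Qed.

Lemma between_even (a b : S) :
  ~~ odd #|[set t : S | [&& a \proper t, t \proper b, #|a|.+1 == #|t| & #|t|.+1 == #|b|]]|.
Proof.
set M := [set t : S | _].
case: (set_0Vmem M) => [-> | [t0]]; first by rewrite cards0.
rewrite inE => /and4P [Hat0 Ht0b /eqP Ha /eqP Hb].
have Hab : a \subset b := subset_trans (proper_sub Hat0) (proper_sub Ht0b).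
have EM : M = [set u |: a | u in b :\: a].
  apply/setP => t; apply/idP/idP.
  - rewrite inE => /and4P [Hat Htb /eqP Hat' /eqP Htb'].
    have [Hsub [u Hut Hua]] := properP Hat.
    apply/imsetP; exists u; first by rewrite inE Hua (subsetP (proper_sub Htb)).
    apply/eqP; rewrite eq_sym eqEcard subUset sub1set Hut Hsub cardsU1 Hua -Hat' /=.
    by [].
  - move=> /imsetP [u]; rewrite inE => /andP [Hua Hub] ->.
    rewrite inE !properEcard subsetUr subUset sub1set Hub Hab cardsU1 Hua -Hb -Ha /= add1n.
    by rewrite !eqxx !ltnSn.
rewrite EM card_in_imset; first by rewrite (cardsDS Hab) -Hb -Ha -addn2 addKn.
move=> u v; rewrite !inE => /andP [Hua _] /andP [Hva _] E.
have : u \in v |: a by rewrite -E !inE eqxx.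
by rewrite !inE (negbTE Hua) orbF => /eqP.
Qed.

Lemma DD_bnd s : s \in K -> linext (bnd K) (bnd K s) = set0.
Proof.
move=> HsK; apply/setP => x; rewrite in_linext [x \in set0]inE big_addb_in.
case HxK: (x \in K); last first.
  by rewrite big1 // => t _; rewrite [x \in bnd K t]inE HxK andbF.
set M := [set t : S | [&& x \proper t, t \proper s, #|x|.+1 == #|t| & #|t|.+1 == #|s|]].
rewrite (eq_bigr (fun t => (t \in M) && true)); last first.
  move=> t _; rewrite !inE HxK andbT /=.
  case HtK: (t \in K) => /=.
    by case: (t \proper s); case: (x \proper t); case: (_ == _); case: (_ == _).
  apply/esym/negbTE/negP => /and4P [Hxt Hts _ _].
  by have := HK.2 s t HsK (proper_ne0 Hxt) (proper_sub Hts); rewrite HtK.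
by rewrite -big_addb_in big_addb_true; apply/negbTE/between_even.
Qed.

Lemma DD_cobnd s : linext (cobnd K) (cobnd K s) = set0.
Proof.
apply/setP => x; rewrite in_linext [x \in set0]inE big_addb_in.
case HxK: (x \in K); last first.
  by rewrite big1 // => t _; rewrite [x \in cobnd K t]inE HxK andbF.
set M := [set t : S | [&& s \proper t, t \proper x, #|s|.+1 == #|t| & #|t|.+1 == #|x|]].
rewrite (eq_bigr (fun t => (t \in M) && true)); last first.
  move=> t _; rewrite !inE HxK andbT /=.
  case HtK: (t \in K) => /=.
    by case: (t \proper x); case: (s \proper t); case: (_ == _); case: (_ == _).
  apply/esym/negbTE/negP => /and4P [Hst Htx _ _].
  by have := HK.2 x t HxK (proper_ne0 Hst) (proper_sub Htx); rewrite HtK.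
by rewrite -big_addb_in big_addb_true; apply/negbTE/between_even.
Qed.

Lemma hom_pr a b : exp_pair W k a b ->
  [/\ a \in K /\ b \in K, a \in bnd K b, T a = T b,
   (forall x, x \in bnd K b -> x <> a -> T x < T a) &
   (forall y, y \in K -> a \in bnd K y -> y = b \/ T a < T y)].
Proof.
move=> Hab; have [HaK HbK] := exp_K Hab; have Hc := exp_card Hab.
have [i [Hik Hfp EW Ta Tb]] := exp_info Hab; have [Hp [Ha [Hb Hfree]]] := Hfp.
have HWc := Wcomplex Hik.
split => //.
- by rewrite inE HaK Hp Hc eqxx.
- by rewrite Ta Tb.
- move=> x; rewrite inE => /andP [HxK /andP [Hxb _]] Hxa.
  have HxW : x \in W i.+1 := HWc.2 b x Hb (K_ne0 HxK) (proper_sub Hxb).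
  have Hxb' : x != b by apply/eqP => E; rewrite E properxx in Hxb.
  have Hxa' : x != a by apply/eqP.
  have HxWi : x \in W i by rewrite EW in_D2 Hxb' Hxa' HxW.
  rewrite Ta; exact: T_lt (ltnW Hik) HxWi.
- move=> y HyK; rewrite inE => /andP [_ /andP [Hay _]].
  case HyW: (y \in W i.+1).
  + case: (Hfree y HyW (proper_sub Hay)) => E; [by rewrite E properxx in Hay | by left].
  + right; rewrite Ta; apply: T_ge => //; by rewrite HyW.
Qed.

Lemma cohom_pr a b : exp_pair W k b a ->
  [/\ a \in K /\ b \in K, a \in cobnd K b, k - T a = k - T b,
   (forall x, x \in cobnd K b -> x <> a -> k - T x < k - T a) &
   (forall y, y \in K -> a \in cobnd K y -> y = b \/ k - T a < k - T y)].
Proof.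
move=> Hba; have [HbK HaK] := exp_K Hba; have Hc := exp_card Hba.
have [i [Hik Hfp EW Tb Ta]] := exp_info Hba; have [Hp [Hb [Ha Hfree]]] := Hfp.
have HWc := Wcomplex Hik.
split => //.
- by rewrite inE HaK Hp Hc eqxx.
- by rewrite Ta Tb.
- move=> x; rewrite inE => /andP [HxK /andP [Hbx _]] Hxa.
  have HxW : x \notin W i.+1.
    apply/negP => HxW; case: (Hfree x HxW (proper_sub Hbx)) => E.
    + by rewrite E properxx in Hbx.
    + by apply: Hxa.
  have := T_ge Hik HxK HxW; rewrite Ta; lia.
- move=> y HyK; rewrite inE => /andP [_ /andP [Hya _]].
  have HyW : y \in W i.+1 := HWc.2 a y Ha (K_ne0 HyK) (proper_sub Hya).
  case: (eqVneq y b) => [-> | Hyb]; first by left.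
  right; have Hya' : y != a by apply/eqP => E; rewrite E properxx in Hya.
  have HyWi : y \in W i by rewrite EW in_D2 Hya' Hyb HyW.
  have := T_lt (ltnW Hik) HyWi; rewrite Ta; lia.
Qed.

Lemma hom_iso r p : reference_map K W k r ->
  quot_iso (cyclesK K p) (boundK K p) (cyclesW K W k r p) (boundW K W k r p).
Proof.
move=> [Hr1 [Hr2 Hr3]].
have H := @abstract_iso V K (bnd K) r (fun s => #|s|) succn predn (critical W k) (exp_pair W k) T.
apply: (H _ _ _ _ _ _ _ _ _ _ _ p.+1 p.+2 erefl erefl erefl).
- move=> s; apply/subsetP => x; by rewrite inE => /andP [].
- exact: DD_bnd.
- exact: tri.
- exact: Hr2.
- move=> a b Hab; apply: Hr3; by exists a.
- move=> s Hs; exact: Hr1 s Hs.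
- exact: hom_pr.
- exact: exp_uniq.
- exact: exp_card.
- by move=> s x _; rewrite inE => /andP [_ /andP [_ /eqP <-]].
- move=> a b x Hab; rewrite inE => /andP [_ /andP [_ /eqP]].
  by rewrite (exp_card Hab) => -[].
Qed.

Lemma cohom_iso r p : coreference_map K W k r ->
  quot_iso (cocyclesK K p) (coboundK K p) (cocyclesW K W k r p) (coboundW K W k r p).
Proof.
move=> [Hr1 [Hr2 Hr3]].
have H := @abstract_iso V K (cobnd K) r (fun s => #|s|) predn succn (critical W k)
  (fun a b => exp_pair W k b a) (fun s => k - T s).
apply: (H _ _ _ _ _ _ _ _ _ _ _ p.+1 p erefl erefl erefl).
- move=> s; apply/subsetP => x; by rewrite inE => /andP [].
- move=> s _; exact: DD_cobnd.
- move=> s Hs; case: (tri Hs) => [? | [? | ?]]; tauto.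
- exact: Hr2.
- move=> a b Hab; apply: Hr3; by exists a.
- move=> s Hs; exact: Hr1 s Hs.
- exact: cohom_pr.
- move=> a b a' b' Hba Hba' ET.
  have [HbK HaK] := exp_K Hba; have [Hb'K Ha'K] := exp_K Hba'.
  have := T_ltk HaK; have := T_ltk Ha'K => H1 H2.
  have ETa : T a = T a' by lia.
  have [i [_ _ _ Tb Ta]] := exp_info Hba; have [i' [_ _ _ Tb' Ta']] := exp_info Hba'.
  have ETb : T b = T b' by rewrite Tb Tb' -Ta -Ta'.
  by have [-> ->] := exp_uniq Hba Hba' ETb.
- by move=> a b Hba; rewrite (exp_card Hba).
- by move=> s x _; rewrite inE => /andP [_ /andP [_ /eqP <-]].
- move=> a b x Hba; rewrite inE => /andP [_ /andP [_ /eqP <-]].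
  by rewrite (exp_card Hba).
Qed.

End Concrete.

Theorem theorem10 (V : finType) (K : {set {set V}}) (W : nat -> {set {set V}})
    (k : nat) (r cr : {set V} -> {set {set V}}) :
  is_complex K -> morse_seq K W k ->
  reference_map K W k r -> coreference_map K W k cr ->
  forall p : nat,
    quot_iso (cyclesK K p) (boundK K p) (cyclesW K W k r p) (boundW K W k r p) /\
    quot_iso (cocyclesK K p) (coboundK K p)
             (cocyclesW K W k cr p) (coboundW K W k cr p).
Proof.
move=> HK HM Hr Hcr p; split; [exact: hom_iso | exact: cohom_iso].
Qed.
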